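(* Let $G$ be a grid-labelled graph of type $(3,3)$ with exactly $5$ edges, all diagonal. Then $G$ satisfies the degree criterion if and only if either $G$ is locally isomorphic to the skew-mesh $B_5$, or $E(G)$ is the disjoint union of the edge set of a graph locally isomorphic to a rotation of the criss-cross $B_2$ and the edge set of a graph locally isomorphic to a rotation of the tally $B_3$.
   Context: A grid-labelled graph of type $(a,b)$ is a simple graph whose vertex set is the grid $[a]\times[b]$. An edge $\{(i,j),(k,l)\}$ is diagonal if $i\neq k$ and $j\neq l$. The partial transpose $\Gamma(G)$ is the grid-labelled graph with edge set $\{\{(k,j),(i,l)\}:\{(i,j),(k,l)\}\in E(G)\}$; $G$ satisfies the degree criterion if every vertex has the same degree in $G$ and in $\Gamma(G)$. Two grid-labelled graphs $G,H$ of type $(a,b)$ are locally isomorphic if there are permutations $\pi$ of $[a]$ and $\sigma$ of $[b]$ with $\{(i,j),(k,l)\}\in E(G)\iff\{(\pi(i),\sigma(j)),(\pi(k),\sigma(l))\}\in E(H)$. A rotation of a type $(3,3)$ graph is its image under a power of the map $(i,j)\mapsto(j,4-i)$ on vertices. Building blocks (type $(3,3)$): criss-cross $B_2$ with edges $\{(1,1),(2,2)\},\{(1,2),(2,1)\}$; tally $B_3$ with edges $\{(1,1),(2,2)\},\{(1,2),(2,3)\},\{(2,1),(1,3)\}$; skew-mesh $B_5$ with edges $\{(1,1),(3,3)\},\{(1,2),(2,1)\},\{(1,3),(2,2)\},\{(2,2),(3,1)\},\{(2,3),(3,2)\}$. *)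

(* Defs.v *)
(* Grid [3]x[3] is encoded 0-indexed as 'I_3 * 'I_3. *)
From mathcomp Require Import all_boot all_fingroup.
Set Implicit Arguments. Unset Strict Implicit. Unset Printing Implicit Defensive.

Definition V := ('I_3 * 'I_3)%type.

(* A grid-labelled graph of type (3,3) is given by its edge set:
   a set of 2-element subsets of V. *)
Definition graph := {set {set V}}.

Definition is_simple (E : graph) : Prop :=
  forall e, e \in E -> exists u v : V, u != v /\ e = [set u; v].

Definition all_diagonal (E : graph) : Prop :=
  forall u v : V, [set u; v] \in E -> u.1 != v.1 /\ u.2 != v.2.

Definition ptrans (E : graph) : graph :=
  [set e' : {set V} | [exists u : V, exists v : V,
     ([set u; v] \in E) && (e' == [set (v.1, u.2); (u.1, v.2)])]].

Definition deg (E : graph) (x : V) : nat := #|[set e in E | x \in e]|.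

Definition degree_criterion (E : graph) : Prop :=
  forall x : V, deg E x = deg (ptrans E) x.

Definition locally_iso (G H : graph) : Prop :=
  exists (pi sigma : {perm 'I_3}), forall u v : V,
    ([set u; v] \in G) = ([set (pi u.1, sigma u.2); (pi v.1, sigma v.2)] \in H).

(* rotation (i,j) |-> (j, 4-i) in 1-indexed coordinates = (j, 2-i) 0-indexed *)
Definition rotv (x : V) : V := (x.2, rev_ord x.1).
Definition rotg (E : graph) : graph := [set rotv @: e | e : {set V} in E].

Definition pt (i j : nat) : V := (inord i, inord j).

Definition B2 : graph :=
  [set [set pt 0 0; pt 1 1]; [set pt 0 1; pt 1 0]].
Definition B3 : graph :=
  [set [set pt 0 0; pt 1 1]; [set pt 0 1; pt 1 2]; [set pt 1 0; pt 0 2]].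
Definition B5 : graph :=
  [set [set pt 0 0; pt 2 2]; [set pt 0 1; pt 1 0]; [set pt 0 2; pt 1 1];
       [set pt 1 1; pt 2 0]; [set pt 1 2; pt 2 1]].

(* Main.v *)
Require Import Defs.
From mathcomp Require Import all_boot all_fingroup.
From Stdlib Require Import PeanoNat.
Set Implicit Arguments. Unset Strict Implicit. Unset Printing Implicit Defensive.

Definition o0 : 'I_3 := @Ordinal 3 0 isT.
Definition o1 : 'I_3 := @Ordinal 3 1 isT.
Definition o2 : 'I_3 := @Ordinal 3 2 isT.
Definition O3 : seq 'I_3 := [:: o0; o1; o2].
Definition Vs : seq V := [seq (a, b) | a <- O3, b <- O3].
Definition diag (p : V * V) := (p.1.1 != p.2.1) && (p.1.2 != p.2.2).
Definition L0 : seq (V * V) :=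
  [seq p <- [seq (u, v) | u <- Vs, v <- Vs] | diag p && (index p.1 Vs < index p.2 Vs)].
Definition eqV (u v : V) : bool := Nat.eqb u.1 v.1 && Nat.eqb u.2 v.2.
Definition eqP2 (p q : V * V) : bool := eqV p.1 q.1 && eqV p.2 q.2.
Definition L : seq (V * V) := Eval vm_compute in L0.
Definition rl (l : seq (V * V)) (u v : V) := has (fun p => eqP2 (u, v) p || eqP2 (v, u) p) l.
Definition critb (r : V -> V -> bool) :=
  all (fun x => Nat.eqb (count (r x) Vs) (count (fun y => r (y.1, x.2) (x.1, y.2)) Vs)) Vs.
Definition trip := ('I_3 * 'I_3 * 'I_3)%type.
Definition tf (t : trip) (x : 'I_3) : 'I_3 :=
  if Nat.eqb x 0 then t.1.1 else if Nat.eqb x 1 then t.1.2 else t.2.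
Definition P6 : seq (trip * trip) :=
  [:: ((o0,o1,o2),(o0,o1,o2)); ((o0,o2,o1),(o0,o2,o1)); ((o1,o0,o2),(o1,o0,o2));
      ((o1,o2,o0),(o2,o0,o1)); ((o2,o0,o1),(o1,o2,o0)); ((o2,o1,o0),(o2,o1,o0))].
Definition rotinv (x : V) : V := (rev_ord x.2, x.1).
Definition phi (pe se : trip * trip) (x : V) : V := (tf pe.1 x.1, tf se.1 x.2).
Definition phiinv (pe se : trip * trip) (x : V) : V := (tf pe.2 x.1, tf se.2 x.2).
Definition isoc (psi psiinv : V -> V) (s h : seq (V * V)) :=
  if all (fun e => rl h (psi e.1) (psi e.2)) s then all (fun e => rl s (psiinv e.1) (psiinv e.2)) h else false.
Definition isoL (s h : seq (V * V)) (k : nat) :=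
  has (fun pe => has (fun se =>
    isoc (fun x => iter k rotinv (phi pe se x)) (fun x => phiinv pe se (iter k rotv x)) s h) P6) P6.
Fixpoint subs (T : Type) (k : nat) (l : seq T) : seq (seq T) :=
  match l with
  | [::] => if k is 0 then [:: [::]] else [::]
  | x :: l' => (if k is k'.+1 then map (cons x) (subs k' l') else [::]) ++ subs k l'
  end.
Definition oo (i : nat) : 'I_3 := if i is 0 then o0 else if i is 1 then o1 else o2.
Definition pv (i j : nat) : V := (oo i, oo j).
Definition b2l : seq (V * V) := [:: (pv 0 0, pv 1 1); (pv 0 1, pv 1 0)].
Definition b3l : seq (V * V) := [:: (pv 0 0, pv 1 1); (pv 0 1, pv 1 2); (pv 1 0, pv 0 2)].
Definition b5l : seq (V * V) := [:: (pv 0 0, pv 2 2); (pv 0 1, pv 1 0); (pv 0 2, pv 1 1);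
   (pv 1 1, pv 2 0); (pv 1 2, pv 2 1)].
Definition check5 (s : seq (V * V)) :=
  if critb (rl s) then (if isoL s b5l 0 then true else has (fun s1 =>
     let s2 := [seq p <- s | ~~ rl s1 p.1 p.2] in
     if has (isoL s1 b2l) (iota 0 4) then has (isoL s2 b3l) (iota 0 4) else false) (subs 2 s))
  else true.
Definition relk (pe se : trip * trip) k (h : seq (V*V)) (u v : V) :=
  rl h (iter k rotinv (phi pe se u)) (iter k rotinv (phi pe se v)).
Definition checkBf pe se k pe' se' k' :=
    if has (fun u => has (fun v => relk pe se k b2l u v && relk pe' se' k' b3l u v) Vs) Vs
    then true else critb (fun u v => relk pe se k b2l u v || relk pe' se' k' b3l u v).
Definition checkA := all (fun pe => all (fun se => critb (relk pe se 0 b5l)) P6) P6.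

Lemma ord3 (x : 'I_3) : x = o0 \/ x = o1 \/ x = o2.
Proof.
case: x => [[|[|[|m]]] H]; [left|right;left|right;right|done]; exact/val_inj.
Qed.

Lemma memVs (x : V) : x \in Vs.
Proof.
case: x => a b.
by case: (ord3 a) => [->|[->|->]]; case: (ord3 b) => [->|[->|->]]; vm_compute.
Qed.

Lemma eqbE (m n : nat) : Nat.eqb m n = (m == n).
Proof. by apply/idP/eqP => [/Nat.eqb_eq|->]; [|apply/Nat.eqb_eq]. Qed.

Lemma eqVE (u v : V) : eqV u v = (u == v).
Proof.
case: u v => [a b] [c d]; rewrite /eqV /= !eqbE xpair_eqE.
by congr andb; apply/eqP/eqP => [/val_inj|->].
Qed.

Lemma eqP2E (p q : V * V) : eqP2 p q = (p == q).
Proof. by case: p q => [a b] [c d]; rewrite /eqP2 /= !eqVE xpair_eqE. Qed.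

Lemma rlE l u v : rl l u v = ((u, v) \in l) || ((v, u) \in l).
Proof.
elim: l => [|p l IH] //=; rewrite !eqP2E IH !in_cons.
by case: ((u,v) == p); case: ((v,u) == p) => //=; rewrite ?orbT.
Qed.

Lemma rl_sym l u v : rl l u v = rl l v u.
Proof. by rewrite !rlE orbC. Qed.

Lemma set2_eqP (u v p q : V) :
  [set u; v] = [set p; q] -> (u = p /\ v = q) \/ (u = q /\ v = p).
Proof.
move=> E.
have hu : u \in [set p; q] by rewrite -E set21.
have hv : v \in [set p; q] by rewrite -E set22.
have hp : p \in [set u; v] by rewrite E set21.
have hq : q \in [set u; v] by rewrite E set22.
move: hu hv hp hq; rewrite !inE => /orP[]/eqP-> /orP[]/eqP-> //; try by left.
- by move=> _ /orP[]/eqP->; left.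
- by right.
- by move=> /orP[]/eqP-> _; left.
Qed.

Lemma set2_eq (u v p q : V) :
  ([set u; v] == [set p; q]) = ((u, v) == (p, q)) || ((v, u) == (p, q)).
Proof.
apply/eqP/orP => [/set2_eqP [[-> ->]|[-> ->]]|[/eqP[-> ->]|/eqP[-> ->]]]; auto.
by rewrite setUC.
Qed.

Lemma ptrans_mem (E : graph) (u v : V) :
  ([set u; v] \in ptrans E) = ([set (v.1, u.2); (u.1, v.2)] \in E).
Proof.
rewrite inE; apply/existsP/idP.
- case=> a /existsP[b /andP[Hab /eqP/set2_eqP[[-> ->]|[-> ->]]]] /=.
  + by rewrite -!surjective_pairing.
  + by rewrite -!surjective_pairing setUC.
- move=> H; exists (v.1, u.2); apply/existsP; exists (u.1, v.2); rewrite H /=.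
  by rewrite -!surjective_pairing.
Qed.

Definition pairish (F : graph) := forall e, e \in F -> exists u v : V, e = [set u; v].

Lemma card_Vs (P : pred V) : #|[set y | P y]| = count P Vs.
Proof.
rewrite cardsE cardE -size_filter; apply: perm_size; apply: uniq_perm.
- exact: enum_uniq.
- by apply: filter_uniq; vm_compute.
- by move=> x; rewrite mem_enum mem_filter memVs andbT.
Qed.

Lemma deg_count (F : graph) (x : V) : pairish F ->
  deg F x = count (fun y => [set x; y] \in F) Vs.
Proof.
move=> hF; rewrite /deg -card_Vs.
have -> : [set e in F | x \in e] = (fun y => [set x; y]) @: [set y | [set x; y] \in F].
  apply/setP => e; rewrite inE; apply/andP/imsetP.
  - case=> eF; have [a [b Ee]] := hF e eF; rewrite Ee => /set2P[Ex|Ex]; subst x.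
      by exists b; rewrite // inE -Ee.
    exists a; first by rewrite inE setUC -Ee.
    by rewrite setUC.
  - by case=> y; rewrite inE => Hy ->; rewrite set21.
apply: card_imset => y z /eqP; rewrite set2_eq => /orP[/eqP[]//|/eqP[-> ->]] //.
Qed.

Lemma crit_iff (E : graph) : pairish E ->
  degree_criterion E <-> critb (fun u v => [set u; v] \in E).
Proof.
move=> hE; have hP : pairish (ptrans E).
  move=> e; rewrite inE => /existsP[a /existsP[b /andP[_ /eqP->]]]; eauto.
split.
- move=> H; apply/allP => x _; rewrite eqbE.
  have := H x; rewrite (deg_count _ hE) (deg_count _ hP) => ->.
  by apply/eqP; apply: eq_count => y; rewrite ptrans_mem.
- move=> /allP H x; have := H x (memVs x); rewrite eqbE => /eqP.
  rewrite (deg_count _ hE) (deg_count _ hP) => ->.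
  by apply: eq_count => y; rewrite ptrans_mem.
Qed.

Lemma critb_ext r r' : r =2 r' -> critb r = critb r'.
Proof.
move=> H; apply: eq_all => x; congr Nat.eqb; apply: eq_count => y; exact: H.
Qed.

Lemma coverL (u v : V) : u.1 != v.1 -> u.2 != v.2 -> ((u, v) \in L) || ((v, u) \in L).
Proof.
move=> h1 h2.
have H : all (fun u => all (fun v => diag (u, v) ==> (((u, v) \in L) || ((v, u) \in L))) Vs) Vs.
  by vm_compute.
by have := allP (allP H u (memVs u)) v (memVs v); rewrite /diag /= h1 h2.
Qed.

Lemma uniqL : uniq L. Proof. by vm_compute. Qed.
Lemma noswapL : all (fun q => (q.2, q.1) \notin L) L. Proof. by vm_compute. Qed.

Definition sE (E : graph) := [seq p <- L | [set p.1; p.2] \in E].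

Lemma bridge (E : graph) : is_simple E -> all_diagonal E ->
  forall u v, ([set u; v] \in E) = rl (sE E) u v.
Proof.
move=> hs hd u v; rewrite rlE !mem_filter /=; apply/idP/idP.
- move=> Huv; have [h1 h2] := hd _ _ Huv.
  have Hvu : [set v; u] \in E by rewrite setUC.
  case/orP: (coverL h1 h2) => H; apply/orP; [left|right]; exact/andP.
- by case/orP => /andP[] // H _; rewrite setUC.
Qed.

Lemma size_sE (E : graph) : is_simple E -> all_diagonal E -> size (sE E) = #|E|.
Proof.
move=> hs hd.
have HE : E = [set e in [seq [set p.1; p.2] | p <- sE E]].
  apply/setP => e; rewrite inE; apply/idP/mapP.
  - move=> He; have [a [b [ab Ee]]] := hs e He; subst e.
    have [h1 h2] := hd _ _ He.
    have Hba : [set b; a] \in E by rewrite setUC.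
    case/orP: (coverL h1 h2) => Hin.
      exists (a, b); last by [].
      rewrite mem_filter; exact/andP.
    exists (b, a); last by rewrite setUC.
    rewrite mem_filter; exact/andP.
  - by case=> p; rewrite mem_filter => /andP[H _] ->.
rewrite {2}HE cardsE.
have Hu : uniq [seq [set p.1; p.2] | p <- sE E].
  rewrite map_inj_in_uniq.
    apply: filter_uniq; exact: uniqL.
  move=> p q; rewrite !mem_filter => /andP[_ Hp] /andP[_ Hq] /eqP.
  rewrite set2_eq => /orP[/eqP Hpq|/eqP Hpq].
    by rewrite -!surjective_pairing in Hpq.
  rewrite -!surjective_pairing in Hpq.
  move: (allP noswapL q Hq); rewrite -Hpq /= -surjective_pairing.
  by rewrite Hp.
rewrite (card_uniqP Hu).
by rewrite size_map.
Qed.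

Lemma subs_filter (T : eqType) (P : pred T) (l : seq T) :
  filter P l \in subs (size (filter P l)) l.
Proof.
elim: l => [|x l IH] //=.
case: (P x) => /=.
  by rewrite mem_cat map_f.
by case: (size _) IH => [|k] IH; rewrite mem_cat IH orbT.
Qed.

Lemma subs_sub (T : eqType) k (l s : seq T) : s \in subs k l -> {subset s <= l}.
Proof.
elim: l k s => [|x l IH] k s /=.
  by case: k => // /[1!inE] /eqP ->.
rewrite mem_cat => /orP[|/IH H y /H]; last by rewrite inE orbC => ->.
case: k => // k /mapP[s' /IH H ->] y; rewrite !inE => /orP[->//|/H ->].
by rewrite orbT.
Qed.

Lemma iso_rl (psi psiinv : V -> V) s h :
  isoc psi psiinv s h -> (forall x, psiinv (psi x) = x) ->
  forall u v, rl s u v = rl h (psi u) (psi v).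
Proof.
rewrite /isoc; case: ifP => // /allP H1 /allP H2 Hinv u v.
apply/idP/idP.
- rewrite rlE => /orP[] H.
    exact: (H1 _ H).
  by rewrite rl_sym; exact: (H1 _ H).
- rewrite rlE => /orP[] H.
    by have := H2 _ H; rewrite /= !Hinv.
  by have := H2 _ H; rewrite /= !Hinv rl_sym.
Qed.

Lemma memO3 (x : 'I_3) : x \in O3.
Proof. by case: (ord3 x) => [->|[->|->]]. Qed.

Lemma tab_inv pe : pe \in P6 -> forall x, tf pe.2 (tf pe.1 x) = x.
Proof.
have H : all (fun pe => all (fun x => tf pe.2 (tf pe.1 x) == x) O3) P6 by vm_compute.
move=> Hpe x; exact/eqP/(allP (allP H pe Hpe) x (memO3 x)).
Qed.

Lemma tab_perm pe : pe \in P6 -> exists pi : {perm 'I_3}, forall x, pi x = tf pe.1 x.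
Proof.
move=> Hpe; have inj : injective (tf pe.1) := can_inj (tab_inv Hpe).
by exists (perm inj) => x; rewrite permE.
Qed.

Lemma perm_tab (pi : {perm 'I_3}) : exists2 pe, pe \in P6 & forall x, pi x = tf pe.1 x.
Proof.
have H : all (fun a => all (fun b => all (fun c =>
   [|| a == b, a == c, b == c | has (fun pe => pe.1 == (a, b, c)) P6]) O3) O3) O3.
  by vm_compute.
have := allP (allP (allP H _ (memO3 (pi o0))) _ (memO3 (pi o1))) _ (memO3 (pi o2)).
rewrite !(inj_eq perm_inj).
case/or4P => [/eqP/(congr1 val)//|/eqP/(congr1 val)//|/eqP/(congr1 val)//|].
case/hasP => pe Hpe /eqP Heq; exists pe => // x.
by case: (ord3 x) => [->|[->|->]]; rewrite Heq.
Qed.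

Lemma rotvK x : rotinv (rotv x) = x.
Proof. by case: x => a b; rewrite /rotinv /rotv /= rev_ordK. Qed.
Lemma rotinvK x : rotv (rotinv x) = x.
Proof. by case: x => a b; rewrite /rotinv /rotv /= rev_ordK. Qed.

Lemma imset2 (f : V -> V) (u v : V) : f @: [set u; v] = [set f u; f v].
Proof. by rewrite imsetU1 imset_set1. Qed.

Lemma rotg_mem (H : graph) u v :
  ([set u; v] \in rotg H) = ([set rotinv u; rotinv v] \in H).
Proof.
apply/imsetP/idP.
- case=> e He Heq.
  suff -> : [set rotinv u; rotinv v] = e by [].
  rewrite -imset2 Heq -imset_comp.
  rewrite (eq_imset _ rotvK); exact: imset_id.
- move=> Hin; exists [set rotinv u; rotinv v] => //.
  by rewrite imset2 !rotinvK.
Qed.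

Lemma iter_rotg_mem k (H : graph) u v :
  ([set u; v] \in iter k rotg H) = ([set iter k rotinv u; iter k rotinv v] \in H).
Proof.
elim: k u v => [|k IH] u v //=.
by rewrite rotg_mem IH -!iterSr.
Qed.

Lemma iter_rotinv4 k x : iter k rotinv x = iter (k %% 4) rotinv x.
Proof.
have H4 : forall y, iter 4 rotinv y = y.
  by case=> a b; rewrite /= /rotinv /= !rev_ordK.
rewrite {1}(divn_eq k 4) iterD.
elim: (k %/ 4) => [|m IH] //.
by rewrite mulSn iterD H4.
Qed.

Lemma rot_iterK k x : iter k rotv (iter k rotinv x) = x.
Proof.
elim: k x => [|k IH] x //.
by rewrite iterSr iterS rotinvK IH.
Qed.

Lemma inord0 : inord 0 = o0 :> 'I_3. Proof. by apply/val_inj; rewrite /= inordK. Qed.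
Lemma inord1 : inord 1 = o1 :> 'I_3. Proof. by apply/val_inj; rewrite /= inordK. Qed.
Lemma inord2 : inord 2 = o2 :> 'I_3. Proof. by apply/val_inj; rewrite /= inordK. Qed.

Lemma B2_mem u v : ([set u; v] \in B2) = rl b2l u v.
Proof.
rewrite /B2 /pt !inord0 !inord1 !inE !set2_eq /rl /= !eqP2E orbF -!orbA.
by [].
Qed.
Lemma B3_mem u v : ([set u; v] \in B3) = rl b3l u v.
Proof.
rewrite /B3 /pt !inord0 !inord1 !inord2 !inE !set2_eq /rl /= !eqP2E orbF -!orbA.
by [].
Qed.
Lemma B5_mem u v : ([set u; v] \in B5) = rl b5l u v.
Proof.
rewrite /B5 /pt !inord0 !inord1 !inord2 !inE !set2_eq /rl /= !eqP2E orbF -!orbA.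
by [].
Qed.

Lemma memf l u v : ([set u; v] \in [seq [set p.1; p.2] | p <- l]) = rl l u v.
Proof.
rewrite rlE; apply/mapP/orP.
- case=> p Hp /set2_eqP [[Hu Hv]|[Hu Hv]].
    by left; rewrite Hu Hv -surjective_pairing.
  by right; rewrite Hu Hv -surjective_pairing.
- case=> H; [exists (u, v) => // | exists (v, u) => //=].
  by rewrite setUC.
Qed.

Lemma rl_filter s s1 u v :
  rl [seq p <- s | ~~ rl s1 p.1 p.2] u v = rl s u v && ~~ rl s1 u v.
Proof.
rewrite [rl (filter _ _) _ _]rlE [rl s _ _]rlE !mem_filter /= (rl_sym s1 v u).
by case: (rl s1 u v); rewrite /= ?andbF ?andbT.
Qed.

Lemma isoL_loc s h k (G H : graph) : isoL s h k ->
  (forall u v, ([set u; v] \in G) = rl s u v) ->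
  (forall a b, ([set a; b] \in H) = rl h a b) -> locally_iso G (iter k rotg H).
Proof.
move=> /hasP[pe Hpe /hasP[se Hse Hc]] HG HH.
have [pi Hpi] := tab_perm Hpe; have [sg Hsg] := tab_perm Hse.
exists pi, sg => u v.
rewrite HG (iso_rl Hc) ?iter_rotg_mem ?HH /phi ?Hpi ?Hsg //.
move=> x; rewrite rot_iterK /phi /phiinv /= !tab_inv //.
by case: x.
Qed.

Lemma loc_rel k (G H : graph) h : locally_iso G (iter k rotg H) ->
  (forall a b, ([set a; b] \in H) = rl h a b) ->
  exists pe, exists se, [/\ pe \in P6, se \in P6 &
     forall u v, ([set u; v] \in G) = relk pe se (k %% 4) h u v].
Proof.
move=> [pi [sg HG]] HH.
have [pe Hpe Hpi] := perm_tab pi; have [se Hse Hsg] := perm_tab sg.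
exists pe, se; split => // u v.
by rewrite HG iter_rotg_mem HH /relk /phi -!iter_rotinv4 -!Hpi -!Hsg.
Qed.

Lemma checkA_ok : checkA. Proof. vm_compute. reflexivity. Qed.
Lemma checkB_ok : all (fun pe => all (fun se => all (fun k =>
  all (fun pe' => all (fun se' => all (fun k' => checkBf pe se k pe' se' k')
  (iota 0 4)) P6) P6) (iota 0 4)) P6) P6. Proof. vm_compute. reflexivity. Qed.
Lemma check5_ok : all check5 (subs 5 L). Proof. vm_compute. reflexivity. Qed.

Lemma dir_to (E : graph) : is_simple E -> #|E| = 5 -> all_diagonal E ->
  critb (fun u v => [set u; v] \in E) -> (locally_iso E B5 \/
     exists E1 E2 : graph,
       E = E1 :|: E2 /\ [disjoint E1 & E2] /\
       (exists k : nat, locally_iso E1 (iter k rotg B2)) /\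
       (exists k : nat, locally_iso E2 (iter k rotg B3))).
Proof.
move=> hs h5 hd.
have hP : pairish E by move=> e /hs[u [v [_ ->]]]; eauto.
have RE := bridge hs hd.
move=> Hc; rewrite (critb_ext RE) in Hc.
have Hs : sE E \in subs 5 L.
  by rewrite -h5 -(size_sE hs hd); exact: subs_filter.
have := allP check5_ok _ Hs; rewrite /check5 Hc.
case: ifP => [Hiso _|_ /hasP[s1 Hs1]].
  by left; exact: (isoL_loc (k := 0) Hiso RE B5_mem).
cbv zeta; case: ifP => // Ha Hb; case/hasP: Ha => k1 _ H1; case/hasP: Hb => k2 _ H2.
have sub1 := subs_sub Hs1.
right.
exists [set e in E | e \in [seq [set p.1; p.2] | p <- s1]],
       [set e in E | e \notin [seq [set p.1; p.2] | p <- s1]].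
split.
  by apply/setP => e; rewrite !inE; case: (e \in E); case: (_ \in _).
split.
  rewrite -setI_eq0; apply/eqP/setP => e; rewrite !inE.
  by case: (e \in E); case: (_ \in _).
split.
  exists k1; apply: (isoL_loc H1 _ B2_mem) => u v.
  rewrite inE memf RE.
  case Hr: (rl s1 u v); rewrite ?andbF ?andbT //.
  move: Hr; rewrite !rlE => /orP[] /sub1 ->; by rewrite ?orbT.
exists k2; apply: (isoL_loc H2 _ B3_mem) => u v.
by rewrite inE memf RE rl_filter.
Qed.

Lemma from_B5 (E : graph) : locally_iso E B5 -> critb (fun u v => [set u; v] \in E).
Proof.
move=> Hl.
have [pe [se [Hpe Hse Hr]]] := loc_rel (k := 0) Hl B5_mem.
have Hc := allP (allP checkA_ok pe Hpe) se Hse.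
rewrite (critb_ext Hr); exact: Hc.
Qed.

Lemma from_split (E E1 E2 : graph) k1 k2 : E = E1 :|: E2 -> [disjoint E1 & E2] ->
  locally_iso E1 (iter k1 rotg B2) -> locally_iso E2 (iter k2 rotg B3) ->
  critb (fun u v => [set u; v] \in E).
Proof.
move=> HE Hd H1 H2.
have [pe [se [Hpe Hse Hr1]]] := loc_rel H1 B2_mem.
have [pe' [se' [Hpe' Hse' Hr2]]] := loc_rel H2 B3_mem.
have Hk : forall k, k %% 4 \in iota 0 4 by move=> k; rewrite mem_iota ltn_pmod.
move: checkB_ok => /allP/(_ pe Hpe)/allP/(_ se Hse)/allP/(_ _ (Hk k1)).
move=> /allP/(_ pe' Hpe')/allP/(_ se' Hse')/allP/(_ _ (Hk k2)).
rewrite /checkBf.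
case: ifP => [/hasP[u _ /hasP[v _ /andP[Hu Hv]]] _|_ Hc].
  rewrite -Hr1 in Hu; rewrite -Hr2 in Hv.
  move: Hd; rewrite -setI_eq0 => /eqP HI.
  have : [set u; v] \in E1 :&: E2 by rewrite inE Hu Hv.
  by rewrite HI inE.
have HH : (fun u v => [set u; v] \in E) =2 (fun u v => relk pe se (k1 %% 4) b2l u v
   || relk pe' se' (k2 %% 4) b3l u v).
  by move=> u v; rewrite HE in_setU Hr1 Hr2.
rewrite (critb_ext HH); exact: Hc.
Qed.

Theorem mainTheorem14 (E : graph) :
  is_simple E -> #|E| = 5 -> all_diagonal E ->
  (degree_criterion E <->
    (locally_iso E B5 \/
     exists E1 E2 : graph,
       E = E1 :|: E2 /\ [disjoint E1 & E2] /\
       (exists k : nat, locally_iso E1 (iter k rotg B2)) /\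
       (exists k : nat, locally_iso E2 (iter k rotg B3)))).
Proof.
move=> hs h5 hd.
have hP : pairish E by move=> e /hs[u [v [_ ->]]]; eauto.
rewrite (crit_iff hP); split; first exact: dir_to.
case=> [Hl|[E1 [E2 [HE [Hd [[k1 H1] [k2 H2]]]]]]].
  exact: from_B5 Hl.
exact: from_split HE Hd H1 H2.
Qed.
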